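(* Let $H_1$ and $H_2$ be two bipartite graphs with $\mathrm{ex}(n, H_1) = O(n^{1 + \alpha})$ and $\mathrm{ex}(n, H_2) = O(n^{1 + \beta})$. Fix $e_1 \in E(H_1)$ and $e_2 \in E(H_2)$. Then the family $\mathcal{H}$ of graphs formed by identifying $e_1$ and $e_2$ satisfies $$\mathrm{ex}(n, \mathcal{H}) = O(n^{1 + \max\{\alpha, \beta\}}).$$
   Context: For a family $\mathcal{H}$ of graphs, $\mathrm{ex}(n,\mathcal{H})$ is the maximum number of edges in an $n$-vertex graph containing no copy of any member of $\mathcal{H}$; $\mathrm{ex}(n,H)=\mathrm{ex}(n,\{H\})$. Identifying an edge $e_1=ab$ of $H_1$ with an edge $e_2=cd$ of $H_2$ means: take the vertex-disjoint union of $H_1$ and $H_2$ and either identify $a$ with $c$ and $b$ with $d$, or identify $a$ with $d$ and $b$ with $c$ (the two resulting edges become one edge). The family $\mathcal{H}$ consists of the (at most two) graphs obtained in these two ways. *)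

(* Defs.v *)
From Stdlib Require Import Reals.
From mathcomp Require Import all_boot.
Set Implicit Arguments. Unset Strict Implicit. Unset Printing Implicit Defensive.

Record graph := Graph { gV : finType; gadj : rel gV }.

Definition simple (H : graph) : Prop :=
  symmetric (@gadj H) /\ irreflexive (@gadj H).

Definition bipartite (H : graph) : Prop :=
  exists c : gV H -> bool, forall u v, @gadj H u v -> c u != c v.

Definition host n := {ffun 'I_n * 'I_n -> bool}.

Definition host_simple n (g : host n) : bool :=
  [forall u, forall v, g (u, v) == g (v, u)] && [forall u, ~~ g (u, u)].

Definition nedges n (g : host n) : nat :=
  #|[set p : 'I_n * 'I_n | g p && (p.1 < p.2)%N]|.

Definition contains n (g : host n) (H : graph) : bool :=
  [exists f : {ffun gV H -> 'I_n},
     injectiveb f && [forall u, forall v, @gadj H u v ==> g (f u, f v)]].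

Definition free n (g : host n) (F : seq graph) : bool :=
  all (fun H => ~~ contains g H) F.

Definition ex (n : nat) (F : seq graph) : nat :=
  \max_(g : host n | host_simple g && free g F) nedges g.

Definition bigO_pow (f : nat -> nat) (e : R) : Prop :=
  exists (C : R) (N : nat), forall n : nat, (N <= n)%nat ->
    Rle (INR (f n)) (Rmult C (Rpower (INR n) (Rplus 1 e))).

Definition sum_adj (H1 H2 : graph) : rel (gV H1 + gV H2) :=
  fun x y => match x, y with
             | inl u, inl v => @gadj H1 u v
             | inr u, inr v => @gadj H2 u v
             | _, _ => false end.

Definition glue_proj (H1 H2 : graph) (a b : gV H1) (c d : gV H2)
  (x : gV H1 + gV H2) : gV H1 + gV H2 :=
  match x with
  | inr w => if w == c then inl a else if w == d then inl b else x
  | inl _ => x end.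

Definition glue_vert (H1 H2 : graph) (a b : gV H1) (c d : gV H2) : finType :=
  {x : gV H1 + gV H2 | glue_proj a b c d x == x}.

Definition glue_adj (H1 H2 : graph) (a b : gV H1) (c d : gV H2)
  : rel (glue_vert a b c d) :=
  fun x y => [exists u, exists v,
    [&& glue_proj a b c d u == val x, glue_proj a b c d v == val y & sum_adj u v]].

Definition glue (H1 H2 : graph) (a b : gV H1) (c d : gV H2) : graph :=
  @Graph (@glue_vert H1 H2 a b c d) (@glue_adj H1 H2 a b c d).

Definition ident_family (H1 H2 : graph) (a b : gV H1) (c d : gV H2) : seq graph :=
  [:: glue a b c d; glue a b d c].

(* Main.v *)
Require Import Defs.
From Stdlib Require Import Reals Lra.
From mathcomp Require Import all_boot zify.
Set Implicit Arguments. Unset Strict Implicit. Unset Printing Implicit Defensive.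

Lemma ex_ub n F B : (forall g : host n, host_simple g -> free g F -> nedges g <= B) -> ex n F <= B.
Proof. by move=> H; apply/bigmax_leqP => g /andP[]; apply: H. Qed.

Lemma ex_lb n F (g : host n) : host_simple g -> free g F -> nedges g <= ex n F.
Proof. by move=> h1 h2; apply: (@leq_bigmax_cond _ (fun g => host_simple g && free g F)); rewrite h1. Qed.

Lemma simple_sub n (g h : host n) : host_simple g -> (forall p, h p -> g p) ->
  (forall u v, h (u,v) = h (v,u)) -> host_simple h.
Proof.
move=> /andP[_ /forallP irr] sub sym; apply/andP; split.
  by apply/forallP=> u; apply/forallP=> v; rewrite sym.
apply/forallP=> u; apply/negP=> /sub; by move: (irr u) => /negP.
Qed.

Lemma nedges_split n (g h1 h2 : host n) : (forall p, g p -> h1 p || h2 p) ->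
  nedges g <= nedges h1 + nedges h2.
Proof.
move=> H; rewrite /nedges; apply: leq_trans (leq_card_setU _ _).
apply: subset_leq_card; apply/subsetP=> p; rewrite !inE => /andP[/H/orP[]-> ->]//.
by rewrite orbT.
Qed.

Lemma card_sets_ord n : #|{set 'I_n}| = 2 ^ n.
Proof.
have ->: 2 ^ n = 2 ^ #|[set: 'I_n]| by rewrite cardsT card_ord.
rewrite -card_powerset; apply: eq_card => A.
by rewrite inE powersetE subsetT.
Qed.

Lemma remap (V : finType) n (f : V -> 'I_n) (N : {set V}) (B : {set 'I_n}) :
  {in N &, injective f} -> (forall u, u \in N -> f u \notin B) -> #|V| + #|B| <= n ->
  exists f' : V -> 'I_n, [/\ injective f', forall u, u \in N -> f' u = f u & forall u, f' u \notin B].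
Proof.
move=> finj fB hc.
pose C := ~: (B :|: f @: N).
pose f' u := if u \in N then f u else nth (f u) (enum C) (index u (enum (~: N))).
have hC : #|~: N| <= #|C|.
  have h1 := cardsC N; have h2 := cardsC (B :|: f @: N).
  have h3 : #|B :|: f @: N| <= #|B| + #|f @: N| by rewrite leq_card_setU. have h4 := leq_imset_card f N.
  rewrite card_ord in h2; rewrite /C; lia.
have inC u : u \notin N -> nth (f u) (enum C) (index u (enum (~: N))) \in C.
  move=> uN; rewrite -mem_enum mem_nth // -cardE.
  apply: (leq_trans _ hC); rewrite cardE index_mem mem_enum inE; exact: uN.
exists f'; split.
- move=> u v; rewrite /f'; case: ifP => uN; case: ifP => vN.
  + by apply: finj.
  + move=> e; have := inC v (negbT vN); rewrite -e !inE => /norP[_].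
    by rewrite (imset_f f uN).
  + move=> e; have := inC u (negbT uN); rewrite e !inE => /norP[_].
    by rewrite (imset_f f vN).
  + move=> e.
    have iu : index u (enum (~: N)) < size (enum C).
      rewrite -cardE; apply: (leq_trans _ hC); rewrite cardE index_mem mem_enum inE uN //.
    have iv : index v (enum (~: N)) < size (enum C).
      rewrite -cardE; apply: (leq_trans _ hC); rewrite cardE index_mem mem_enum inE vN //.
    have := e; rewrite (set_nth_default (f u) (f v) iv) => /eqP.
    rewrite nth_uniq ?enum_uniq // => /eqP ei.
    rewrite -(nth_index u (_ : u \in enum (~: N))); last by rewrite mem_enum inE uN.
    rewrite ei nth_index // mem_enum inE vN //.
- by move=> u uN; rewrite /f' uN.
- move=> u; rewrite /f'; case: ifP => uN; first by apply: fB.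
  by have := inC u (negbT uN); rewrite !inE => /norP[].
Qed.


Definition is_copy n (g : host n) (H : graph) (f : {ffun gV H -> 'I_n}) : bool :=
  injectiveb f && [forall u, forall v, @gadj H u v ==> g (f u, f v)].

Lemma is_copyP n (g : host n) (H : graph) (f : {ffun gV H -> 'I_n}) :
  is_copy g f -> injective f /\ (forall u v, @gadj H u v -> g (f u, f v)).
Proof.
case/andP=> /injectiveP fi /forallP e; split=> // u v huv.
by have /forallP/(_ v)/implyP := e u; apply.
Qed.

Lemma glue_contains n (g : host n) (H1 H2 : graph) (a b : gV H1) (c d : gV H2)
  (f1 : {ffun gV H1 -> 'I_n}) (f2 : {ffun gV H2 -> 'I_n}) :
  is_copy g f1 -> is_copy g f2 -> f1 a = f2 c -> f1 b = f2 d ->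
  (forall u w, u != a -> u != b -> f1 u != f2 w) -> contains g (glue a b c d).
Proof.
move=> /is_copyP[i1 e1] /is_copyP[i2 e2] ac bd disj.
pose Fz (z : gV H1 + gV H2) := match z with inl u => f1 u | inr w => f2 w end.
have Fp z : Fz (glue_proj a b c d z) = Fz z.
  case: z => //= w; case: ifP => [/eqP->|_] //=; case: ifP => [/eqP->|_] //=.
apply/existsP; exists [ffun x : glue_vert a b c d => Fz (val x)]; apply/andP; split.
  apply/injectiveP => x y; rewrite !ffunE.
  case: x => [zx px]; case: y => [zy py] /= e.
  apply: val_inj => /=.
  case: zx px e => [u|w] px; case: zy py => [u'|w'] py /= e.
  - by rewrite (i1 _ _ e).
  - move: py => /=; case: ifP => // /negbT wc; case: ifP => // /negbT wd _.
    case: (eqVneq u a) => [ua|ua]; first by move: e; rewrite ua ac => /i2 ew; rewrite ew eqxx in wc.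
    case: (eqVneq u b) => [ub|ub]; first by move: e; rewrite ub bd => /i2 ew; rewrite ew eqxx in wd.
    by move: (disj u w' ua ub); rewrite e eqxx.
  - move: px => /=; case: ifP => // /negbT wc; case: ifP => // /negbT wd _.
    case: (eqVneq u' a) => [ua|ua]; first by move: e; rewrite ua ac => /i2 ew; rewrite -ew eqxx in wc.
    case: (eqVneq u' b) => [ub|ub]; first by move: e; rewrite ub bd => /i2 ew; rewrite -ew eqxx in wd.
    by move: (disj u' w ua ub); rewrite e eqxx.
  - by rewrite (i2 _ _ e).
apply/forallP => x; apply/forallP => y; apply/implyP => /existsP[u /existsP[v /and3P[/eqP pu /eqP pv s]]].
rewrite !ffunE -pu -pv !Fp.
by case: u v s {pu pv} => [u|u] [v|v] //= s; [apply: e1 | apply: e2].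
Qed.


Definition good2 n (g : host n) (H : graph) (c d : gV H) (u v : 'I_n) (S : {set 'I_n}) : bool :=
  [exists f : {ffun gV H -> 'I_n}, [&& is_copy g f,
     ((f c == u) && (f d == v)) || ((f c == v) && (f d == u)) & [forall w, f w \notin S]]].
Definition admS n (h : nat) (u v : 'I_n) (S : {set 'I_n}) := [&& #|S| <= h, u \notin S & v \notin S].
Definition robust n (g : host n) (H : graph) (c d : gV H) h (u v : 'I_n) :=
  [forall S, admS h u v S ==> good2 g c d u v S].
Definition block n (g : host n) (H : graph) (c d : gV H) h (u v : 'I_n) S :=
  admS h u v S && ~~ good2 g c d u v S.
Definition Rg n (g : host n) (H : graph) (c d : gV H) h : host n :=
  [ffun p => g p && robust g c d h p.1 p.2].
Definition NRg n (g : host n) (H : graph) (c d : gV H) h : host n :=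
  [ffun p => g p && ~~ robust g c d h p.1 p.2].
Definition KT n (g : host n) (H : graph) (c d : gV H) h (T : {set 'I_n}) : host n :=
  [ffun p => [&& g p, p.1 \in T, p.2 \in T & [exists S, block g c d h p.1 p.2 S && [disjoint S & T]]]].

Lemma good2C n (g : host n) (H : graph) (c d : gV H) u v S : good2 g c d u v S = good2 g c d v u S.
Proof. by apply: eq_existsb => f; rewrite (orbC (_ && _)). Qed.
Lemma admSC n h (u v : 'I_n) S : admS h u v S = admS h v u S.
Proof. by rewrite /admS (andbC (u \notin S)). Qed.
Lemma robustC n (g : host n) (H : graph) (c d : gV H) h u v : robust g c d h u v = robust g c d h v u.
Proof. by apply: eq_forallb => S; rewrite admSC good2C. Qed.
Lemma blockC n (g : host n) (H : graph) (c d : gV H) h u v S : block g c d h u v S = block g c d h v u S.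
Proof. by rewrite /block admSC good2C. Qed.

Lemma KT_free n (g : host n) (H1 H2 : graph) (c d : gV H2) T :
  @gadj H2 c d -> #|gV H2| + #|gV H1| <= n -> ~~ contains (KT g c d #|gV H1| T) H2.
Proof.
move=> cd hn; apply/negP => /existsP[f /is_copyP[fi fe]].
pose N := [set w | [exists z, @gadj H2 w z || @gadj H2 z w]].
have /fe := cd; rewrite ffunE /= => /and4P[_ _ _ /existsP[S /andP[bl dj]]].
have fT w : w \in N -> f w \in T.
  rewrite inE => /existsP[z /orP[] /fe]; rewrite ffunE /= => /and4P[] //.
have fS w : w \in N -> f w \notin S.
  move=> /fT wT; apply/negP => wS.
  by rewrite (disjointFr dj wS) in wT.
move: bl => /andP[/and3P[hS _ _] /negP]; apply.
have [f' [f'i f'N f'S]] := remap (f := f) (N := N) (B := S) (fun x y _ _ => @fi x y) fS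
   (leq_trans (leq_add (leqnn _) hS) hn).
have cN : c \in N by rewrite inE; apply/existsP; exists d; rewrite cd.
have dN : d \in N by rewrite inE; apply/existsP; exists c; rewrite cd orbT.
apply/existsP; exists [ffun w => f' w]; apply/and3P; split.
- apply/andP; split; first by apply/injectiveP => x y; rewrite !ffunE; apply: f'i.
  apply/forallP => x; apply/forallP => y; apply/implyP => xy.
  have xN : x \in N by rewrite inE; apply/existsP; exists y; rewrite xy.
  have yN : y \in N by rewrite inE; apply/existsP; exists x; rewrite xy orbT.
  rewrite !ffunE f'N // f'N //; have := fe _ _ xy; rewrite ffunE => /andP[].
  done.
- by rewrite !ffunE f'N // f'N // !eqxx.
- by apply/forallP => w; rewrite ffunE.
Qed.


Lemma R_free n (g : host n) (H1 H2 : graph) (a b : gV H1) (c d : gV H2) :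
  @gadj H1 a b -> free g (ident_family a b c d) -> ~~ contains (Rg g c d #|gV H1|) H1.
Proof.
move=> ab; rewrite /free /= andbT => /andP[/negP n1 /negP n2].
apply/negP => /existsP[f1 /is_copyP[f1i f1e]].
have c1 : is_copy g f1.
  apply/andP; split; first by apply/injectiveP.
  apply/forallP => x; apply/forallP => y; apply/implyP => /f1e; rewrite ffunE => /andP[].
  done.
have := f1e _ _ ab; rewrite ffunE /= => /andP[_ /forallP rob].
pose S := f1 @: [set u | (u != a) && (u != b)].
have adm : admS #|gV H1| (f1 a) (f1 b) S.
  apply/and3P; split.
  - exact: leq_trans (leq_imset_card _ _) (max_card _).
  - apply/imsetP => -[u]; rewrite inE => /andP[ua _] /f1i e; by rewrite e eqxx in ua.
  - apply/imsetP => -[u]; rewrite inE => /andP[_ ub] /f1i e; by rewrite e eqxx in ub.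
have := rob S; rewrite adm /= => /existsP[f2 /and3P[c2 or /forallP av]].
have disj u w : u != a -> u != b -> f1 u != f2 w.
  move=> ua ub; apply/eqP => e; have := av w; rewrite -e.
  by rewrite (imset_f f1) // inE ua ub.
case/orP: or => /andP[/eqP e1 /eqP e2].
- by apply: n1; apply: (glue_contains c1 c2).
- by apply: n2; apply: (glue_contains c1 c2).
Qed.


Lemma card_as_sum (T : finType) (P : pred T) : #|[set x | P x]| = \sum_x (P x : nat).
Proof. rewrite -sum1_card big_mkcond; apply: eq_bigr => x _; rewrite inE; by case: (P x). Qed.

Lemma count_T n (u v : 'I_n) (S : {set 'I_n}) (P : pred {set 'I_n}) k :
  u \notin S -> v \notin S -> #|S| + 2 + k <= n ->
  (forall T : {set 'I_n}, u \in T -> v \in T -> [disjoint S & T] -> P T) ->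
  2 ^ k <= \sum_T (P T : nat).
Proof.
move=> uS vS hk HP.
pose A := [set u; v]; pose C := ~: (S :|: A).
rewrite -card_as_sum.
have hC : k <= #|C|.
  have h1 := cardsC (S :|: A); rewrite card_ord in h1.
  have h2 : #|S :|: A| <= #|S| + #|A| by rewrite leq_card_setU.
  have h3 : #|A| <= 2 by rewrite cards2; case: (u == v).
  rewrite /C; lia.
apply: leq_trans (leq_pexp2l (isT : 0 < 2) hC) _.
rewrite -card_powerset -(@card_in_imset _ _ (fun U => U :|: A)).
  apply: subset_leq_card; apply/subsetP => y /imsetP[U]; rewrite inE => sU ->.
  rewrite inE; apply: HP; rewrite ?inE ?eqxx ?orbT //.
  rewrite -setI_eq0 setIUr; apply/eqP; apply/setP => x; rewrite !inE.
  case xS: (x \in S) => //=; apply/negP => /orP[xU|/orP[/eqP xu|/eqP xv]].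
  - by move: sU => /subsetP/(_ _ xU); rewrite !inE xS.
  - by rewrite -xu xS in uS.
  - by rewrite -xv xS in vS.
move=> U1 U2; rewrite !inE => s1 s2 e.
have dA (U : {set 'I_n}) : U \subset C -> U = (U :|: A) :\: A.
  move=> sU; apply/setP => x; rewrite !inE; case xU: (x \in U) => /=.
    by move: sU => /subsetP/(_ _ xU); rewrite !inE => /norP[_ ->].
  by case: (x == u); case: (x == v).
by rewrite (dA _ s1) (dA _ s2) e.
Qed.


Lemma NR_bound n (g : host n) (H1 H2 : graph) (c d : gV H2) :
  host_simple g -> @gadj H2 c d -> #|gV H2| + #|gV H1| + 2 <= n ->
  2 ^ (n - (#|gV H1| + 2)) * nedges (NRg g c d #|gV H1|) <= 2 ^ n * ex n [:: H2].
Proof.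
set h := #|gV H1|; move=> gs cd hn.
have gsym u v : g (u, v) = g (v, u).
  by move: gs => /andP[/forallP/(_ u)/forallP/(_ v)/eqP].
have KTb T : nedges (KT g c d h T) <= ex n [:: H2].
  apply: ex_lb; last first.
    have hn' : #|gV H2| + #|gV H1| <= n by rewrite /h in hn; lia.
    by rewrite /free /= andbT KT_free.
  apply: (simple_sub gs); first by move=> p; rewrite ffunE => /andP[].
  move=> u v; rewrite !ffunE /= gsym (andbCA (u \in T)); congr [&& _, _, _ & _].
  by apply: eq_existsb => S; rewrite blockC.
have sum_up : \sum_(T : {set 'I_n}) nedges (KT g c d h T) <= 2 ^ n * ex n [:: H2].
  apply: (@leq_trans (\sum_(T : {set 'I_n}) ex n [:: H2])); first by apply: leq_sum => T _; apply: KTb.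
  by rewrite big_const iter_addn_0 card_sets_ord mulnC.
apply: leq_trans sum_up.
rewrite /nedges card_as_sum.
rewrite (eq_bigr (fun T => \sum_p (KT g c d h T p && (p.1 < p.2) : nat))); last by move=> T _; rewrite card_as_sum.
rewrite exchange_big /= big_distrr /=; apply: leq_sum => p _.
case Hp: (NRg g c d h p && (p.1 < p.2)); last by rewrite muln0.
rewrite muln1; move: Hp; rewrite ffunE => /andP[/andP[gp nr] lt].
move: nr; rewrite negb_forall => /existsP[S]; rewrite negb_imply => /andP[adm ng].
move: (adm) => /and3P[hS uS vS].
apply: (count_T (P := fun T => _) uS vS).
  rewrite -/h; lia.
move=> T uT vT dj; rewrite ffunE gp uT vT lt /= andbT.
by apply/existsP; exists S; rewrite /block adm ng dj.
Qed.


Lemma ex_family_bound n (H1 H2 : graph) (a b : gV H1) (c d : gV H2) :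
  @gadj H1 a b -> @gadj H2 c d -> #|gV H2| + #|gV H1| + 2 <= n ->
  ex n (ident_family a b c d) <= ex n [:: H1] + 2 ^ (#|gV H1| + 2) * ex n [:: H2].
Proof.
move=> ab cd hn; apply: ex_ub => g gs fr.
set h := #|gV H1|.
have gsym u v : g (u, v) = g (v, u).
  by move: gs => /andP[/forallP/(_ u)/forallP/(_ v)/eqP].
apply: leq_trans (nedges_split (h1 := Rg g c d h) (h2 := NRg g c d h) _) _.
  by move=> p gp; rewrite !ffunE gp /=; case: robust.
apply: leq_add.
  apply: ex_lb; last by rewrite /free /= andbT (R_free ab fr).
  apply: (simple_sub gs); first by move=> p; rewrite ffunE => /andP[].
  by move=> u v; rewrite !ffunE /= gsym robustC.
have := NR_bound gs cd hn; rewrite -/h.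
have -> : 2 ^ n = 2 ^ (n - (h + 2)) * 2 ^ (h + 2).
  rewrite -expnD subnK //; rewrite /h in hn *; lia.
by rewrite -mulnA leq_pmul2l // expn_gt0.
Qed.


Theorem theorem1p2 (H1 H2 : graph) (alpha beta : R) :
  simple H1 -> simple H2 -> bipartite H1 -> bipartite H2 ->
  bigO_pow (fun n => ex n [:: H1]) alpha ->
  bigO_pow (fun n => ex n [:: H2]) beta ->
  forall (a b : gV H1) (c d : gV H2), @gadj H1 a b -> @gadj H2 c d ->
  bigO_pow (fun n => ex n (ident_family a b c d)) (Rmax alpha beta).
Proof.
move=> _ _ _ _ [C1 [N1 h1]] [C2 [N2 h2]] a b c d ab cd.
set K := 2 ^ (#|gV H1| + 2).
exists (Rplus (Rabs C1) (Rmult (INR K) (Rabs C2))), (N1 + N2 + (#|gV H2| + #|gV H1| + 2)).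
move=> n hn.
have hb := ex_family_bound ab cd (_ : #|gV H2| + #|gV H1| + 2 <= n).
have hb' := hb ltac:(lia).
have e1 := h1 n ltac:(lia). have e2 := h2 n ltac:(lia).
simpl in e1, e2 |- *.
have n1 : (Rle 1 (INR n)).
  have : (1 <= n)%coq_nat by apply/leP; lia.
  by move/le_INR.
set Pm := Rpower (INR n) (Rplus 1 (Rmax alpha beta)).
have P1 : (Rle (Rpower (INR n) (Rplus 1 alpha)) Pm).
  apply: Rle_Rpower => //; have := Rmax_l alpha beta; lra.
have P2 : (Rle (Rpower (INR n) (Rplus 1 beta)) Pm).
  apply: Rle_Rpower => //; have := Rmax_r alpha beta; lra.
have Q1 : (Rlt 0 (Rpower (INR n) (Rplus 1 alpha))) by apply: exp_pos.
have Q2 : (Rlt 0 (Rpower (INR n) (Rplus 1 beta))) by apply: exp_pos.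
have A1 : (Rle (Rmult C1 (Rpower (INR n) (Rplus 1 alpha))) (Rmult (Rabs C1) Pm)).
  apply: Rle_trans (_ : Rle (Rmult (Rabs C1) (Rpower (INR n) (Rplus 1 alpha))) _).
    by apply: Rmult_le_compat_r; [lra | apply: Rle_abs].
  by apply: Rmult_le_compat_l; [apply: Rabs_pos | ].
have A2 : (Rle (Rmult C2 (Rpower (INR n) (Rplus 1 beta))) (Rmult (Rabs C2) Pm)).
  apply: Rle_trans (_ : Rle (Rmult (Rabs C2) (Rpower (INR n) (Rplus 1 beta))) _).
    by apply: Rmult_le_compat_r; [lra | apply: Rle_abs].
  by apply: Rmult_le_compat_l; [apply: Rabs_pos | ].
have K0 : (Rle 0 (INR K)) by apply: pos_INR.
rewrite -/K in hb'; have := le_INR _ _ (elimT leP hb'); rewrite plus_INR mult_INR => hE.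
have : (Rle (Rmult (INR K) (INR (ex n [:: H2]))) (Rmult (INR K) (Rmult (Rabs C2) Pm))).
  apply: Rmult_le_compat_l => //; lra.
rewrite Rmult_plus_distr_r; lra.
Qed.
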